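(* Let $M$ be a matroid on a finite set $E$ with $r(M)>0$. Then $|F(M)|=r(M)$ if and only if $M$ is a unique expansion matroid.
   Context: For a matroid $M=(E,\mathcal{I})$: $\mathcal{B}(M)$ is its family of bases, $r(M)$ the common cardinality of bases, and $r(X)$ the rank of $X\subseteq E$. For $r(M)>0$: $s(M)=\{A\in\mathcal{I}(M): |A|=r(M)-1\}$; $K_M(X)=\{a\in E: r(X\cup\{a\})=r(X)+1\}$ for $X\subseteq E$; $F(M)=\{K_M(X): X\in s(M)\}$ (a set of sets, so $|F(M)|$ counts distinct sets). $M$ is a unique expansion matroid if for every $B\in\mathcal{B}(M)$ and every $A\in s(M)$, whenever $e_1,e_2\in B$ satisfy $A\cup\{e_1\}\in\mathcal{B}(M)$ and $A\cup\{e_2\}\in\mathcal{B}(M)$, then $e_1=e_2$. *)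

(* Defs.v *)
From mathcomp Require Import all_boot.
Set Implicit Arguments. Unset Strict Implicit. Unset Printing Implicit Defensive.

Definition is_matroid (E : finType) (I : {set {set E}}) : Prop :=
  [/\ set0 \in I,
      (forall A B : {set E}, B \in I -> A \subset B -> A \in I) &
      (forall A B : {set E}, A \in I -> B \in I -> #|A| < #|B| ->
         exists2 x, x \in B :\: A & x |: A \in I)].

Section MatroidDefs.
Variables (E : finType) (I : {set {set E}}).

Definition bases : {set {set E}} :=
  [set B in I | [forall C in I, (B \subset C) ==> (C == B)]].

Definition rk (X : {set E}) : nat := \max_(A in I | A \subset X) #|A|.

Definition mrank : nat := rk setT.

Definition sM : {set {set E}} := [set A in I | #|A| == mrank - 1].

Definition KM (X : {set E}) : {set E} := [set a | rk (a |: X) == (rk X).+1].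

Definition FM : {set {set E}} := [set KM X | X in sM].

Definition unique_expansion : Prop :=
  forall B A, B \in bases -> A \in sM ->
  forall e1 e2, e1 \in B -> e2 \in B ->
    e1 |: A \in bases -> e2 |: A \in bases -> e1 = e2.

End MatroidDefs.

(* Main.v *)
Require Import Defs.
From mathcomp Require Import all_boot zify.

Set Implicit Arguments.
Section M.
Variables (E : finType) (I : {set {set E}}).
Hypothesis HM : is_matroid I.

Lemma aug {A B : {set E}} : A \in I -> B \in I -> #|A| < #|B| ->
  exists2 x, x \in B :\: A & x |: A \in I.
Proof. by case: HM => _ _; apply. Qed.

Lemma rk_ex (X : {set E}) : exists2 C, (C \in I) && (C \subset X) & rk I X = #|C|.
Proof.
have : 0 < #|[pred C : {set E} | (C \in I) && (C \subset X)]|.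
  apply/card_gt0P; exists set0; rewrite inE /=.
  by case: HM => -> _ _; rewrite sub0set.
move/(eq_bigmax_cond (fun C : {set E} => #|C|)) => [C HC e].
by exists C => //; rewrite /rk -e; apply: eq_bigl => D; rewrite !inE.
Qed.

Lemma rk_ge {C X : {set E}} : C \in I -> C \subset X -> #|C| <= rk I X.
Proof. move=> h1 h2; rewrite /rk; apply: (@leq_bigmax_cond _ (fun D => (D \in I) && (D \subset X)) (fun C : {set E} => #|C|)); by rewrite h1 h2. Qed.

Lemma rk_ind {X : {set E}} : X \in I -> rk I X = #|X|.
Proof.
move=> hX; apply/eqP; rewrite eqn_leq rk_ge // andbT.
case: (rk_ex X) => C /andP[_ h] ->; exact: subset_leq_card.
Qed.

Lemma KM_ind (X : {set E}) a : X \in I -> (a \in KM I X) = (a \notin X) && (a |: X \in I).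
Proof.
move=> hX; rewrite /KM inE (rk_ind hX).
apply/idP/idP.
  move/eqP => h; case: (rk_ex (a |: X)) => C /andP[hC sC] hr.
  have [x] := aug hX hC ltac:(by rewrite -hr h).
  rewrite inE => /andP[xX xC] hx.
  have : x \in a |: X by apply: (subsetP sC).
  rewrite in_setU1 (negbTE xX) orbF => /eqP xa; subst x.
  by rewrite xX hx.
move=> /andP[aX h]; by rewrite rk_ind // cardsU1 aX.
Qed.

Lemma ind_le {C : {set E}} : C \in I -> #|C| <= mrank I.
Proof. move=> h; exact: rk_ge h (subsetT _). Qed.

Lemma base_ex : exists2 B, B \in I & #|B| = mrank I.
Proof. case: (rk_ex setT) => C /andP[h _] e; by exists C => //; rewrite /mrank e. Qed.

Lemma basesE (B : {set E}) : (B \in bases I) = (B \in I) && (#|B| == mrank I).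
Proof.
rewrite /bases inE; apply/idP/idP.
  case/andP=> hB /forall_inP hmax; rewrite hB /=.
  case: base_ex => C hC eC.
  rewrite eqn_leq ind_le //=; rewrite leqNgt; apply/negP => lt.
  have [x] := aug hB hC ltac:(by rewrite eC).
  rewrite inE => /andP[xB _] hx.
  have := hmax _ hx; rewrite subsetUr /= => /eqP e.
  by move: xB; rewrite -e setU11.
case/andP=> hB /eqP eB; rewrite hB /=; apply/forall_inP => C hC.
apply/implyP => sBC; rewrite eq_sym eqEcard sBC /= eB; exact: ind_le.
Qed.

Lemma sME (A : {set E}) : (A \in sM I) = (A \in I) && (#|A| == mrank I - 1).
Proof. by rewrite inE. Qed.

Hypothesis Hr : 0 < mrank I.

Lemma base_exp (A : {set E}) e : A \in sM I -> (e |: A \in bases I) = (e \in KM I A).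
Proof.
rewrite sME => /andP[hA /eqP cA].
rewrite basesE KM_ind // cardsU1 cA.
case: (e \in A) => /=.
  have -> : (0 + (mrank I - 1) == mrank I) = false by apply/negbTE/eqP; lia.
  by rewrite andbF.
have -> : (1 + (mrank I - 1) == mrank I) by apply/eqP; lia.
by rewrite andbT.
Qed.

Lemma L1 {A X : {set E}} : A \in sM I -> X \in sM I -> [disjoint X & KM I A] ->
  [disjoint A & KM I X].
Proof.
rewrite !sME => /andP[hA /eqP cA] /andP[hX /eqP cX] dXA.
apply/pred0P => y /=; apply/negP => /andP[yA].
rewrite KM_ind // => /andP[yX hy].
have [z] := aug hA hy ltac:(by rewrite cardsU1 yX cA cX add1n ltnSn).
rewrite inE in_setU1 => /andP[zA /orP[/eqP zy|zX]] hz.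
  by subst z; rewrite yA in zA.
have : z \in KM I A by rewrite KM_ind // zA hz.
by move: dXA => /pred0P /(_ z) /=; rewrite zX /= => ->.
Qed.

Lemma L2 {A X : {set E}} : A \in sM I -> X \in sM I -> [disjoint X & KM I A] ->
  KM I A \subset KM I X.
Proof.
move=> sA sX d; have d2 := L1 sA sX d.
move: sA sX; rewrite !sME => /andP[hA /eqP cA] /andP[hX /eqP cX].
apply/subsetP => a; rewrite KM_ind // => /andP[aA ha].
have aX : a \notin X.
  apply/negP => aX; move: d => /pred0P /(_ a) /=; rewrite aX /= KM_ind // aA ha //.
have [y] := aug hX ha ltac:(by rewrite cardsU1 aA cA cX add1n ltnSn).
rewrite inE in_setU1 => /andP[yX /orP[/eqP ya|yA]] hy.
  by subst y; rewrite KM_ind // aX hy.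
have : y \in KM I X by rewrite KM_ind // yX hy.
by move: d2 => /pred0P /(_ y) /=; rewrite yA /= => ->.
Qed.

Lemma Leq (A X : {set E}) : A \in sM I -> X \in sM I -> [disjoint X & KM I A] ->
  KM I A = KM I X.
Proof.
move=> sA sX d; apply/eqP; rewrite eqEsubset L2 //=.
apply: L2 => //; exact: L1.
Qed.

Lemma sM_del (B : {set E}) b : B \in I -> #|B| = mrank I -> b \in B -> B :\ b \in sM I.
Proof.
move=> hB cB bB; rewrite sME; apply/andP; split.
  by case: HM => _ h _; apply: h hB (subsetDl _ _).
by rewrite (cardsD1 b B) bB add1n in cB; rewrite -cB subn1.
Qed.

Lemma in_K_del (B : {set E}) b c : B \in I -> b \in B -> c \in B ->
  (c \in KM I (B :\ b)) = (c == b).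
Proof.
move=> hB bB cB.
have hBb : B :\ b \in I by case: HM => _ h _; apply: h hB (subsetDl _ _).
rewrite KM_ind // !inE cB andbT negbK.
case: eqP => [->|//]; by rewrite setD1K.
Qed.

Lemma img_card (B : {set E}) : B \in I -> #|[set KM I (B :\ b) | b in B]| = #|B|.
Proof.
move=> hB; apply: card_in_imset => b c bB cB e.
have : b \in KM I (B :\ b) by rewrite in_K_del // eqxx.
by rewrite e in_K_del // => /eqP.
Qed.

Lemma img_sub (B : {set E}) : B \in I -> #|B| = mrank I ->
  [set KM I (B :\ b) | b in B] \subset FM I.
Proof.
move=> hB cB; apply/subsetP => K /imsetP[b bB ->].
apply/imsetP; exists (B :\ b) => //; exact: sM_del.
Qed.

End M.

Theorem theorem5 (E : finType) (I : {set {set E}}) :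
  is_matroid I -> 0 < mrank I ->
  (#|FM I| = mrank I <-> unique_expansion I).
Proof.
move=> HM Hr; split.
  move=> cF B A hB sA e1 e2 e1B e2B b1 b2.
  rewrite (base_exp HM Hr _ sA) in b1; rewrite (base_exp HM Hr _ sA) in b2.
  move: hB; rewrite (basesE HM) => /andP[hB /eqP cB].
  have eqF : [set KM I (B :\ b) | b in B] = FM I.
    by apply/eqP; rewrite eqEcard img_sub // img_card // cF cB leqnn.
  have : KM I A \in FM I by apply/imsetP; exists A.
  rewrite -eqF => /imsetP[b bB eK].
  rewrite eK in b1 b2; rewrite in_K_del // in b1; rewrite in_K_del // in b2.
  by rewrite (eqP b1) (eqP b2).
move=> UE.
case: (base_ex HM) => B hB cB.
have eqF : [set KM I (B :\ b) | b in B] = FM I.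
  apply/eqP; rewrite eqEsubset img_sub //=.
  apply/subsetP => K /imsetP[A sA ->].
  have := sA; rewrite sME => /andP[hA /eqP cA].
  have [b] := aug HM hA hB ltac:(by rewrite cB cA; lia).
  rewrite inE => /andP[bA bB] hb.
  have bK : b \in KM I A by rewrite KM_ind // bA hb.
  apply/imsetP; exists b => //.
  apply: Leq => //; first exact: sM_del.
  apply/pred0P => c /=; apply/negP => /andP[cBb cK].
  move: cBb; rewrite !inE => /andP[cb cB'].
  have hBb : B \in bases I by rewrite basesE // hB cB eqxx.
  move: (UE B A hBb sA c b cB' bB); rewrite !base_exp // => /(_ cK bK) e.
  by rewrite e eqxx in cb.
by rewrite -eqF img_card.
Qed.
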